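(* There exist absolute constants $C,c>0$ such that the following holds. Let $x$ be a random vector in $\{0,1\}^n$ whose coordinates are i.i.d. Bernoulli with parameter $p\in(0,1/2]$, and let $y$ be a random vector in $\{0,1\}^m$, independent of $x$, whose coordinates are i.i.d. Bernoulli with parameter $q\in(0,1)$. Let $(x_k,y_k)$, $k=1,\ldots,K$, be sampled independently from the distribution of $(x,y)$. Let $m_0\ge m$ be such that $Kq\ge C\log m_0$, $np\ge C\log(Km_0)$, and $Kq\log(Km_0)\le cn$. Then, with probability at least $1-3m/m_0$, there exists $F\in\mathcal{T}(n,m)$ such that $F(x_k)=y_k$ for all $k=1,\ldots,K$. Moreover, one may take $F=h(Wx-b)$ with $W:=\sum_{k=1}^K y_k\bar{x}_k^{\mathsf T}$, where $\bar x_k = x_k-\mathbb{E}x_k$, and $b$ any vector (fixed or dependent on the data) whose coordinates all satisfy $\frac{np}{8}<b(i)<\frac{np}{4}$.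
   Context: $\mathcal{T}(n,m)$ is the set of maps $F:\mathbb{R}^n\to\{0,1\}^m$ of the form $F(x)=h(Wx-b)$ with $W$ a real $m\times n$ matrix, $b\in\mathbb{R}^m$, and $h$ the Heaviside function applied componentwise ($h(t)=0$ for $t<0$, $h(t)=1$ for $t>0$). *)

(* Defs.v *)
From HB Require Import structures.
From Stdlib Require Import Reals.
From mathcomp Require Import all_boot all_order all_algebra.
From mathcomp Require Import boolp Rstruct.
Set Implicit Arguments. Unset Strict Implicit. Unset Printing Implicit Defensive.
Import Order.TTheory GRing.Theory Num.Theory.
Local Open Scope ring_scope.

Definition bern (p : R) (b : bool) : R := if b then p else 1 - p.

Definition sample (n m K : nat) : finType :=
  {ffun 'I_K -> {ffun 'I_n -> bool} * {ffun 'I_m -> bool}}.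

Definition sample_weight (n m K : nat) (p q : R) (d : sample n m K) : R :=
  \prod_(k < K) ((\prod_(j < n) bern p ((d k).1 j)) *
                 (\prod_(i < m) bern q ((d k).2 i))).

Definition Prob (n m K : nat) (p q : R) (E : sample n m K -> Prop) : R :=
  \sum_(d : sample n m K) (if `[< E d >] then sample_weight p q d else 0).

Definition vec01 (l : nat) (x : {ffun 'I_l -> bool}) : 'cV[R]_l :=
  \col_(j < l) ((x j : nat)%:R).

(* F = h(W x - b) maps x to y, with h(t)=0 for t<0 and h(t)=1 for t>0
   (h(0) is undefined, so each coordinate of W x - b must be nonzero with
   the sign prescribed by y). *)
Definition thr_maps (n m : nat) (W : 'M[R]_(m, n)) (b : 'cV[R]_m)
    (x : {ffun 'I_n -> bool}) (y : {ffun 'I_m -> bool}) : Prop :=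
  forall i : 'I_m,
    let t := (W *m vec01 x - b) i 0 in (y i -> 0 < t) /\ (~~ y i -> t < 0).

Definition interpolable (n m K : nat) (d : sample n m K) : Prop :=
  exists (W : 'M[R]_(m, n)) (b : 'cV[R]_m),
    forall k : 'I_K, thr_maps W b (d k).1 (d k).2.

Definition hebb_W (n m K : nat) (p : R) (d : sample n m K) : 'M[R]_(m, n) :=
  \sum_(k < K) (vec01 (d k).2 *m (vec01 (d k).1 - const_mx p)^T).

(* Main.v *)
Require Import Defs.
From HB Require Import structures.
From Stdlib Require Import Reals.
From mathcomp Require Import all_boot all_order all_algebra.
From mathcomp Require Import boolp Rstruct.
From mathcomp Require Import lra ring.
Import Order.TTheory GRing.Theory Num.Theory.
Local Open Scope ring_scope.

Definition ex (x : R) : R := exp x.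
Arguments ex x%_ring_scope.

Lemma exD (x y : R) : ex x * ex y = ex (x + y).
Proof. exact: expRD. Qed.

Lemma ex0 : ex 0 = 1.
Proof. exact: expR0. Qed.

Lemma ex_gt0 (x : R) : 0 < ex x.
Proof. by apply/RltP; apply: exp_pos. Qed.

Lemma ex_ge0 (x : R) : 0 <= ex x.
Proof. exact: ltW (ex_gt0 x). Qed.

Lemma ex_ge1D (x : R) : 1 + x <= ex x.
Proof. by apply/RleP; apply: exp_ineq1_le. Qed.

Lemma ex_le (x y : R) : x <= y -> ex x <= ex y.
Proof.
move=> h; have -> : y = x + (y - x) by ring.
rewrite -exD; have h1 := ex_ge1D (y - x)%R; have h2 := ex_gt0 x.
rewrite -{1}(mulr1 (ex x)) ler_wpM2l ?(ltW h2) //; lra.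
Qed.

Lemma ex_lt (x y : R) : x < y -> ex x < ex y.
Proof. by move=> h; apply/RltP; apply: exp_increasing; apply/RltP. Qed.

Lemma ex_N (x : R) : ex x * ex (- x) = 1.
Proof. by rewrite exD subrr ex0. Qed.

Lemma ex_ln (x : R) : 0 < x -> ex (ln x) = x.
Proof. by move=> h; apply: exp_ln; apply/RltP. Qed.

Lemma ex_small (x : R) : -(1/2) <= x <= 1/2 -> ex x <= 1 + x + 2 * x ^+ 2.
Proof.
case/andP=> h1 h2.
have e1 := ex_ge1D (- x)%R. have e2 := ex_N x. have e3 := ex_gt0 x.
have h3 : ex x * (1 - x) <= 1.
  rewrite -e2 ler_wpM2l ?(ltW e3) //; lra.
have h4 : 1 <= (1 - x) * (1 + x + 2 * x ^+ 2).
  have : 0 <= x ^+ 2 * (1 - 2 * x) by apply: mulr_ge0; [exact: sqr_ge0| lra].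
  have -> : (1 - x) * (1 + x + 2 * x ^+ 2) = 1 + x ^+ 2 * (1 - 2 * x) by ring.
  lra.
have h5 : 0 <= 1 + x + 2 * x ^+ 2 by have := sqr_ge0 x; nra.
have h6 : ex x <= ex x * ((1 - x) * (1 + x + 2 * x ^+ 2)).
  by rewrite -{1}(mulr1 (ex x)) ler_wpM2l // ltW.
have h7 : ex x * ((1 - x) * (1 + x + 2 * x ^+ 2)) <= 1 + x + 2 * x ^+ 2.
  rewrite mulrA -{2}(mul1r (1 + x + _)); exact: ler_wpM2r.
lra.
Qed.

Lemma ex_sum (I : Type) (r : seq I) (P : pred I) (F : I -> R) :
  ex (\sum_(i <- r | P i) F i) = \prod_(i <- r | P i) ex (F i).
Proof.
by apply: (big_morph ex (id1 := 1) (op1 := *%R)) => [x y|]; rewrite ?exD ?ex0.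
Qed.

Lemma exX (c : R) (n : nat) : ex c ^+ n = ex (n%:R * c).
Proof. by rewrite /ex expRX mulr_natl. Qed.

Lemma ex_prod_le (I : finType) (F : I -> R) (c : R) :
  (forall i, 0 <= F i <= ex c) -> \prod_i F i <= ex (#|I|%:R * c).
Proof.
move=> h; apply: (@le_trans _ _ (\prod_(i : I) ex c)).
  by apply: ler_prod => i _; exact: h.
by rewrite prodr_const exX.
Qed.

Set Implicit Arguments. Unset Strict Implicit. Unset Printing Implicit Defensive.
Section Sec. Bind Scope ring_scope with R.

Definition br (b : bool) : R := (b : nat)%:R.

Lemma brE b : br b = if b then 1 else 0.
Proof. by case: b. Qed.

Lemma br_ge0 b : 0 <= br b. Proof. by rewrite brE; case: b. Qed.
Lemma br_le1 b : br b <= 1. Proof. by rewrite brE; case: b. Qed.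
Lemma brK b : br b * br b = br b. Proof. by rewrite brE; case: b; rewrite ?mulr1 ?mulr0. Qed.

Definition wx (l : nat) (r : R) (x : {ffun 'I_l -> bool}) : R :=
  \prod_(j < l) bern r (x j).

Definition w1 (n m : nat) (p q : R) (u : {ffun 'I_n -> bool} * {ffun 'I_m -> bool}) : R :=
  wx p u.1 * wx q u.2.

Lemma E_prod0 (I T : finType) (F : I -> T -> R) :
  \sum_(d : {ffun I -> T}) \prod_i F i (d i) = \prod_i \sum_t F i t.
Proof. by rewrite bigA_distr_bigA. Qed.

Lemma E_prod (I T : finType) (w : T -> R) (F : I -> T -> R) :
  \sum_(d : {ffun I -> T}) (\prod_i w (d i)) * \prod_i F i (d i) =
  \prod_i \sum_t w t * F i t.
Proof.
rewrite -E_prod0; apply: eq_bigr => d _; by rewrite -big_split.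
Qed.

Lemma wx_all l r (h : 'I_l -> bool -> R) :
  \sum_x wx r x * \prod_j h j (x j) = \prod_j ((1 - r) * h j false + r * h j true).
Proof. rewrite /wx E_prod; apply: eq_bigr => j _; by rewrite big_bool /= addrC. Qed.

Lemma wx_mass l r : \sum_(x : {ffun 'I_l -> bool}) wx r x = 1.
Proof.
have /= := @wx_all l r (fun _ _ => 1).
have -> : \prod_(j < l) ((1 - r) * 1 + r * 1) = 1 by rewrite big1 // => j _; ring.
move=> <-; apply: eq_bigr => x _; by rewrite big1 ?mulr1.
Qed.

Lemma wx_coord l r (i : 'I_l) (g : bool -> R) :
  \sum_x wx r x * g (x i) = (1 - r) * g false + r * g true.
Proof.
have := wx_all r (fun j b => if j == i then g b else 1).
have -> : \prod_(j < l) ((1 - r) * (if j == i then g false else 1) + r * (if j == i then g true else 1))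
   = (1 - r) * g false + r * g true.
  rewrite (bigD1 i) //= eqxx [X in _ * X]big1 ?mulr1 //.
  by move=> j hj; rewrite (negbTE hj); ring.
move=> <-; apply: eq_bigr => x _; congr (_ * _).
by rewrite (bigD1 i) //= eqxx big1 ?mulr1 // => j hj; rewrite (negbTE hj).
Qed.

Lemma bern_ge0 r b : 0 <= r <= 1 -> 0 <= bern r b.
Proof. by case/andP=> h1 h2; case: b => /=; lra. Qed.

Lemma wx_ge0 l r (x : {ffun 'I_l -> bool}) : 0 <= r <= 1 -> 0 <= wx r x.
Proof. by move=> h; apply: prodr_ge0 => j _; exact: bern_ge0. Qed.

Lemma sum_pair (X Y : finType) (F : X * Y -> R) :
  \sum_u F u = \sum_x \sum_y F (x, y).
Proof. by rewrite pair_bigA; apply: eq_bigr => -[]. Qed.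

Lemma row_x n m p q (g : {ffun 'I_n -> bool} -> R) :
  \sum_(u : {ffun 'I_n -> bool} * {ffun 'I_m -> bool}) w1 p q u * g u.1 =
  \sum_x wx p x * g x.
Proof.
rewrite sum_pair; apply: eq_bigr => x _ /=.
rewrite /w1 /=.
transitivity (wx p x * g x * \sum_(y : {ffun 'I_m -> bool}) wx q y).
  by rewrite mulr_sumr; apply: eq_bigr => y _; rewrite /w1 /= mulrAC.
by rewrite (@wx_mass m q) mulr1.
Qed.

Lemma row_y n m p q (g : {ffun 'I_m -> bool} -> R) :
  \sum_(u : {ffun 'I_n -> bool} * {ffun 'I_m -> bool}) w1 p q u * g u.2 =
  \sum_y wx q y * g y.
Proof.
rewrite sum_pair.
transitivity (\sum_(x : {ffun 'I_n -> bool}) wx p x * \sum_y wx q y * g y).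
  by apply: eq_bigr => x _; rewrite mulr_sumr; apply: eq_bigr => y _; rewrite /w1 /= mulrA.
by rewrite -mulr_suml wx_mass mul1r.
Qed.

Lemma E_cond (I T : finType) (w : T -> R) (k0 : I) (G : T -> R) (H : T -> T -> R) :
  \sum_(d : {ffun I -> T}) (\prod_i w (d i)) * (G (d k0) * \prod_(i | i != k0) H (d k0) (d i))
  = \sum_t w t * G t * \prod_(i | i != k0) \sum_u w u * H t u.
Proof.
transitivity (\sum_(d : {ffun I -> T}) \sum_t (if d k0 == t then
   (\prod_i w (d i)) * (G t * \prod_(i | i != k0) H t (d i)) else 0)).
  apply: eq_bigr => d _; rewrite [RHS](bigD1 (d k0)) //= eqxx [X in _ + X]big1 ?addr0 //.
  by move=> t; rewrite eq_sym => /negbTE ->.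
rewrite exchange_big; apply: eq_bigr => t _.
pose F i u := if i == k0 then (if u == t then w t * G t else 0) else w u * H t u.
transitivity (\sum_(d : {ffun I -> T}) \prod_i F i (d i)).
  apply: eq_bigr => d _; rewrite [RHS](bigD1 k0) //= /F eqxx.
  under [X in _ = _ * X]eq_bigr => i /negbTE -> do [].
  case: eqP => [<-|_]; last by rewrite mul0r.
  rewrite (bigD1 k0) //= big_split /=; ring.
rewrite E_prod0 (bigD1 k0) //= /F eqxx.
rewrite (bigD1 t) //= eqxx big1 ?addr0; last by move=> u /negbTE ->.
congr (_ * _); apply: eq_bigr => i /negbTE ->; done.
Qed.
End Sec.

Set Implicit Arguments. Unset Strict Implicit. Unset Printing Implicit Defensive.
Section Sec. Bind Scope ring_scope with R.

Definition sz n (x : {ffun 'I_n -> bool}) : R := \sum_j br (x j).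
Definition Zf n (p : R) (a x : {ffun 'I_n -> bool}) : R :=
  \sum_j br (a j) * (br (x j) - p).
Definition Nz n m K (p : R) (d : sample n m K) (k : 'I_K) (i : 'I_m) : R :=
  \sum_(l | l != k) br ((d l).2 i) * Zf p (d k).1 (d l).1.

Lemma hebb_entry n m K (p : R) (d : sample n m K) k i :
  (hebb_W p d *m vec01 (d k).1) i 0 = br ((d k).2 i) * (sz (d k).1 * (1 - p)) + Nz p d k i.
Proof.
rewrite /hebb_W mulmx_suml summxE (bigD1 k) //=; congr (_ + _).
  rewrite -mulmxA mxE big_ord1 !mxE /sz mulr_suml; congr (_ * _).
  apply: eq_bigr => j _; rewrite !mxE /br; case: ((d k).1 j) => /=; ring.
apply: eq_bigr => l _; rewrite -mulmxA mxE big_ord1 !mxE /Zf; congr (_ * _).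
apply: eq_bigr => j _; rewrite !mxE /br; ring.
Qed.

Lemma good_maps n m K (p : R) (d : sample n m K) (b : 'cV[R]_m) k :
  0 <= p <= 1/2 ->
  (forall i : 'I_m, n%:R * p / 8 < b i 0 < n%:R * p / 4) ->
  3 * (n%:R * p) / 4 < sz (d k).1 ->
  (forall i, - (n%:R * p / 8) < Nz p d k i < n%:R * p / 8) ->
  thr_maps (hebb_W p d) b (d k).1 (d k).2.
Proof.
case/andP=> p0 p1 hb hs hN i /=.
have -> : (hebb_W p d *m vec01 (d k).1 - b) i 0 = (hebb_W p d *m vec01 (d k).1) i 0 - b i 0 by rewrite !mxE.
rewrite hebb_entry.
have /andP[b1 b2] := hb i; have /andP[N1 N2] := hN i.
have s0 : 0 <= sz (d k).1 by apply: sumr_ge0 => j _; exact: br_ge0.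
have h : sz (d k).1 / 2 <= sz (d k).1 * (1 - p).
  rewrite ler_pdivrMr //; nra.
rewrite brE; case: ((d k).2 i) => /=; split => // _; lra.
Qed.

Lemma term_le_sum (I : finType) (F : I -> R) i :
  (forall j, 0 <= F j) -> F i <= \sum_j F j.
Proof.
move=> h; rewrite (bigD1 i) //= lerDl; apply: sumr_ge0 => j _; exact: h.
Qed.

Lemma ex_lt1 x : ex x < 1 -> x < 0.
Proof. move=> h; rewrite ltNge; apply/negP => /ex_le; rewrite ex0; lra. Qed.

Definition f1 n m K (q : R) (d : sample n m K) (i : 'I_m) : R :=
  ex ((\sum_l br ((d l).2 i) - 3 * (K%:R * q)) / 2).
Definition f2 n m K (p : R) (d : sample n m K) (k : 'I_K) : R :=
  ex ((3 * (n%:R * p) / 4 - sz (d k).1) / 16).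
Definition f2' n m K (p : R) (d : sample n m K) (k : 'I_K) : R :=
  ex ((sz (d k).1 - 2 * (n%:R * p)) / 4).
Definition f3 n m K (p q lam sg : R) (d : sample n m K) (k : 'I_K) (i : 'I_m) : R :=
  (if sz (d k).1 <= 2 * (n%:R * p) then 1 else 0) *
  ex (2 * p * lam ^+ 2 * sz (d k).1 * (3 * (K%:R * q) - \sum_(l | l != k) br ((d l).2 i))
      + sg * lam * Nz p d k i - lam * (n%:R * p / 8)).
Definition FF n m K (p q lam : R) (d : sample n m K) : R :=
  \sum_i f1 q d i + \sum_k (f2 p d k + f2' p d k) +
  \sum_k \sum_i (f3 p q lam 1 d k i + f3 p q lam (-1) d k i).

Lemma f3_ge0 n m K (p q lam sg : R) (d : sample n m K) k i : 0 <= f3 p q lam sg d k i.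
Proof. by apply: mulr_ge0; [case: ifP | exact: ex_ge0]. Qed.

Lemma FF_ge0 n m K (p q lam : R) (d : sample n m K) : 0 <= FF p q lam d.
Proof.
rewrite /FF; apply: addr_ge0; first apply: addr_ge0.
- by apply: sumr_ge0 => i _; exact: ex_ge0.
- by apply: sumr_ge0 => k _; apply: addr_ge0; exact: ex_ge0.
- by apply: sumr_ge0 => k _; apply: sumr_ge0 => i _; apply: addr_ge0; exact: f3_ge0.
Qed.

Lemma le_addA (a b c x : R) : x <= a -> 0 <= b -> 0 <= c -> x <= a + b + c.
Proof. lra. Qed.
Lemma le_addB (a b c x : R) : x <= b -> 0 <= a -> 0 <= c -> x <= a + b + c.
Proof. lra. Qed.
Lemma le_addC (a b c x : R) : x <= c -> 0 <= a -> 0 <= b -> x <= a + b + c.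
Proof. lra. Qed.

Lemma FF_good n m K (p q lam : R) (d : sample n m K) :
  0 < lam -> 0 <= p <= 1/2 -> 0 <= q -> FF p q lam d < 1 ->
  forall b : 'cV[R]_m,
    (forall i : 'I_m, n%:R * p / 8 < b i 0 < n%:R * p / 4) ->
    forall k : 'I_K, thr_maps (hebb_W p d) b (d k).1 (d k).2.
Proof.
move=> l0 hp q0 hF b hb k.
have s1 : 0 <= \sum_i f1 q d i by apply: sumr_ge0 => i _; exact: ex_ge0.
have s2 : 0 <= \sum_k (f2 p d k + f2' p d k).
  by apply: sumr_ge0 => k' _; apply: addr_ge0; exact: ex_ge0.
have s3 : 0 <= \sum_k \sum_i (f3 p q lam 1 d k i + f3 p q lam (-1) d k i).
  by apply: sumr_ge0 => k' _; apply: sumr_ge0 => i _; apply: addr_ge0; exact: f3_ge0.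
have hM : forall i, \sum_l br ((d l).2 i) < 3 * (K%:R * q).
  move=> i; have : f1 q d i < 1.
    apply: le_lt_trans hF; rewrite /FF.
    apply: le_addA s2 s3; apply: term_le_sum => j; exact: ex_ge0.
  by move/ex_lt1; lra.
have h2 : f2 p d k + f2' p d k < 1.
  apply: le_lt_trans hF; rewrite /FF.
  apply: le_addB s1 s3; apply: (@term_le_sum _ (fun k => f2 p d k + f2' p d k)) => j.
  exact: addr_ge0 (ex_ge0 _) (ex_ge0 _).
have e2 : 0 <= f2 p d k by exact: ex_ge0.
have e2' : 0 <= f2' p d k by exact: ex_ge0.
have hs1 : 3 * (n%:R * p) / 4 < sz (d k).1.
  have : f2 p d k < 1 by lra.
  by rewrite /f2 => /ex_lt1; lra.
have hs2 : sz (d k).1 < 2 * (n%:R * p).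
  have : f2' p d k < 1 by lra.
  by rewrite /f2' => /ex_lt1; lra.
have s0 : 0 <= sz (d k).1 by apply: sumr_ge0 => j _; exact: br_ge0.
apply: good_maps => // i.
have h3 : f3 p q lam 1 d k i + f3 p q lam (-1) d k i < 1.
  apply: le_lt_trans hF; rewrite /FF.
  apply: le_addC s1 s2.
  apply: le_trans (@term_le_sum _ (fun k => \sum_i (f3 p q lam 1 d k i + f3 p q lam (-1) d k i)) k _).
    apply: (@term_le_sum _ (fun i => f3 p q lam 1 d k i + f3 p q lam (-1) d k i)) => j.
    exact: addr_ge0 (f3_ge0 _ _ _ _ _ _ _) (f3_ge0 _ _ _ _ _ _ _).
  move=> j; apply: sumr_ge0 => j' _.
  exact: addr_ge0 (f3_ge0 _ _ _ _ _ _ _) (f3_ge0 _ _ _ _ _ _ _).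
have hMk : \sum_(l | l != k) br ((d l).2 i) <= \sum_l br ((d l).2 i).
  rewrite [X in _ <= X](bigD1 k) //= lerDr; exact: br_ge0.
have hth : 0 <= 2 * p * lam ^+ 2 * sz (d k).1 * (3 * (K%:R * q) - \sum_(l | l != k) br ((d l).2 i)).
  case/andP: hp => p0 _; apply: mulr_ge0; last by have := hM i; lra.
  apply: mulr_ge0 => //; apply: mulr_ge0 => //; first lra.
  exact: sqr_ge0.
have g1 := f3_ge0 p q lam 1 d k i; have g2 := f3_ge0 p q lam (-1) d k i.
rewrite /f3 ifT ?(ltW hs2) // !mul1r in h3 g1 g2.
have /ex_lt1 c1 : ex (2 * p * lam ^+ 2 * sz (d k).1 * (3 * (K%:R * q) - \sum_(l | l != k) br ((d l).2 i)) +
      lam * Nz p d k i - lam * (n%:R * p / 8)) < 1 by lra.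
have /ex_lt1 c2 : ex (2 * p * lam ^+ 2 * sz (d k).1 * (3 * (K%:R * q) - \sum_(l | l != k) br ((d l).2 i)) +
      -1 * lam * Nz p d k i - lam * (n%:R * p / 8)) < 1 by lra.
have c3 : lam * Nz p d k i < lam * (n%:R * p / 8) by lra.
have c4 : lam * (- Nz p d k i) < lam * (n%:R * p / 8) by lra.
rewrite !ltr_pM2l // in c3 c4; lra.
Qed.
End Sec.

Set Implicit Arguments. Unset Strict Implicit. Unset Printing Implicit Defensive.
Section Sec. Bind Scope ring_scope with R.

Lemma swE n m K p q (d : sample n m K) : sample_weight p q d = \prod_k w1 p q (d k).
Proof. by []. Qed.

Lemma w1_ge0 n m p q (u : {ffun 'I_n -> bool} * {ffun 'I_m -> bool}) :
  0 <= p <= 1 -> 0 <= q <= 1 -> 0 <= w1 p q u.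
Proof. by move=> hp hq; apply: mulr_ge0; exact: wx_ge0. Qed.

Lemma sw_ge0 n m K p q (d : sample n m K) :
  0 <= p <= 1 -> 0 <= q <= 1 -> 0 <= sample_weight p q d.
Proof. by move=> hp hq; rewrite swE; apply: prodr_ge0 => k _; exact: w1_ge0. Qed.

Lemma w1_mass n m p q :
  \sum_(u : {ffun 'I_n -> bool} * {ffun 'I_m -> bool}) w1 p q u = 1.
Proof.
have := @row_x n m p q (fun _ => 1).
under eq_bigr do rewrite mulr1.
by move=> ->; under eq_bigr do rewrite mulr1; rewrite wx_mass.
Qed.

Lemma sw_mass n m K p q : \sum_(d : sample n m K) sample_weight p q d = 1.
Proof.
under eq_bigr do rewrite swE.
rewrite (E_prod0 (fun _ => w1 p q)).
by rewrite big1 // => k _; rewrite w1_mass.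
Qed.

Lemma Prob_lb n m K p q (E : sample n m K -> Prop) (F : sample n m K -> R) :
  0 <= p <= 1 -> 0 <= q <= 1 -> (forall d, 0 <= F d) -> (forall d, F d < 1 -> E d) ->
  1 - \sum_d sample_weight p q d * F d <= Prob p q E.
Proof.
move=> hp hq F0 hE; rewrite /Prob.
have -> : 1 - \sum_d sample_weight p q d * F d = \sum_d sample_weight p q d * (1 - F d).
  rewrite -[in LHS](@sw_mass n m K p q) -sumrB; apply: eq_bigr => d _; ring.
apply: ler_sum => d _; have w0 := sw_ge0 d hp hq.
case: (asboolP (E d)) => h.
  have := mulr_ge0 w0 (F0 d); nra.
have hF : 1 <= F d by rewrite leNgt; apply/negP => /hE.
apply: mulr_ge0_le0 => //; lra.
Qed.

Definition one2 n m (u v : {ffun 'I_n -> bool} * {ffun 'I_m -> bool}) : R := 1.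

Lemma Ex_row n m K p q (k : 'I_K) (G : {ffun 'I_n -> bool} * {ffun 'I_m -> bool} -> R) :
  \sum_(d : sample n m K) sample_weight p q d * G (d k) = \sum_u w1 p q u * G u.
Proof.
transitivity (\sum_(d : {ffun 'I_K -> {ffun 'I_n -> bool} * {ffun 'I_m -> bool}}) (\prod_i w1 p q (d i)) *
   (G (d k) * \prod_(i | i != k) (@one2 n m) (d k) (d i))).
  by apply: eq_bigr => d _; rewrite swE [X in G _ * X]big1 ?mulr1.
rewrite E_cond; apply: eq_bigr => u _.
rewrite big1 ?mulr1 // => l _.
by under eq_bigr do rewrite /one2 mulr1; rewrite w1_mass.
Qed.

Lemma Ex_sum n m K p q (I : finType) (g : I -> sample n m K -> R) :
  \sum_(d : sample n m K) sample_weight p q d * \sum_i g i d =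
  \sum_i \sum_(d : sample n m K) sample_weight p q d * g i d.
Proof.
rewrite exchange_big /=; apply: eq_bigr => d _; by rewrite mulr_sumr.
Qed.

End Sec.

Set Implicit Arguments. Unset Strict Implicit. Unset Printing Implicit Defensive.
Section Sec. Bind Scope ring_scope with R.

Lemma sum_sample n m K (F : {ffun 'I_K -> {ffun 'I_n -> bool} * {ffun 'I_m -> bool}} -> R) :
  \sum_(d : sample n m K) F d =
  \sum_(d : {ffun 'I_K -> {ffun 'I_n -> bool} * {ffun 'I_m -> bool}}) F d.
Proof. by []. Qed.

Lemma ex_half : ex (1/2) <= 2.
Proof. have := @ex_small (1/2); lra. Qed.

Lemma Ex_f1 n m K p q (i : 'I_m) : 0 <= p <= 1 -> 0 <= q <= 1 ->
  \sum_(d : sample n m K) sample_weight p q d * f1 q d i <= ex (- (K%:R * q) / 2).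
Proof.
move=> hp hq.
have e : forall d : sample n m K,
    f1 q d i = ex (- (3 * (K%:R * q)) / 2) * \prod_l ex (br ((d l).2 i) / 2).
  move=> d; rewrite /f1 -ex_sum exD -mulr_suml; congr ex; ring.
under eq_bigr do rewrite e swE mulrCA.
rewrite -mulr_sumr sum_sample (E_prod (w1 p q) (fun _ u => ex (br (u.2 i) / 2))).
have r : forall l : 'I_K, 0 <= \sum_(u : {ffun 'I_n -> bool} * {ffun 'I_m -> bool}) w1 p q u * ex (br (u.2 i) / 2) <= ex q.
  move=> l; rewrite (@row_y n m p q (fun y => ex (br (y i) / 2))).
  rewrite (@wx_coord m q i (fun b => ex (br b / 2))) /= !brE mul0r ex0.
  have := ex_half; have := ex_ge1D q; have := ex_gt0 (1/2); nra.
have := ex_prod_le _ _ _ r; rewrite card_ord => h.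
have h0 := ex_gt0 (- (3 * (K%:R * q)) / 2).
apply: le_trans (ler_wpM2l (ltW h0) h) _.
rewrite exD; apply: ex_le; clear e r h h0; lra.
Qed.

Lemma Ex_f2 n m K p q (k : 'I_K) : 0 <= p <= 1 -> 0 <= q <= 1 ->
  \sum_(d : sample n m K) sample_weight p q d * f2 p d k <= ex (- (n%:R * p) / 128).
Proof.
move=> hp hq; rewrite /f2.
rewrite (@Ex_row n m K p q k (fun u => ex ((3 * (n%:R * p) / 4 - sz u.1) / 16))).
rewrite (@row_x n m p q (fun x => ex ((3 * (n%:R * p) / 4 - sz x) / 16))).
have e : forall x : {ffun 'I_n -> bool}, ex ((3 * (n%:R * p) / 4 - sz x) / 16) =
   ex (3 * (n%:R * p) / 64) * \prod_j ex (- br (x j) / 16).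
  move=> x; have -> : \prod_j ex (- br (x j) / 16) = ex (- sz x / 16).
    by rewrite -ex_sum /sz -mulr_suml sumrN.
  rewrite exD; congr ex; lra.
under eq_bigr do rewrite e mulrCA.
rewrite -mulr_sumr (wx_all p (fun j b => ex (- br b / 16))).
have r : forall j : 'I_n, 0 <= (1 - p) * ex (- br false / 16) + p * ex (- br true / 16)
     <= ex (- (7 / 128) * p).
  move=> j; rewrite !brE oppr0 mul0r ex0 mulr1.
  have := @ex_small (- 1 / 16); have := ex_ge1D (- (7 / 128) * p); have := ex_gt0 (- 1 / 16).
  move=> h1 h2 h3.
  have h4 : ex (- 1 / 16) <= 121 / 128 by move: h3; lra.
  case/andP: hp => p0 p1; apply/andP; split; nra.
have := ex_prod_le _ _ _ r; rewrite card_ord => h.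
have h0 := ex_gt0 (3 * (n%:R * p) / 64).
apply: le_trans (ler_wpM2l (ltW h0) h) _.
rewrite exD; apply: ex_le; clear e r h h0; lra.
Qed.

Lemma Ex_f2' n m K p q (k : 'I_K) : 0 <= p <= 1 -> 0 <= q <= 1 ->
  \sum_(d : sample n m K) sample_weight p q d * f2' p d k <= ex (- (n%:R * p) / 8).
Proof.
move=> hp hq; rewrite /f2'.
rewrite (@Ex_row n m K p q k (fun u => ex ((sz u.1 - 2 * (n%:R * p)) / 4))).
rewrite (@row_x n m p q (fun x => ex ((sz x - 2 * (n%:R * p)) / 4))).
have e : forall x : {ffun 'I_n -> bool}, ex ((sz x - 2 * (n%:R * p)) / 4) =
   ex (- (n%:R * p) / 2) * \prod_j ex (br (x j) / 4).
  move=> x; have -> : \prod_j ex (br (x j) / 4) = ex (sz x / 4).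
    by rewrite -ex_sum /sz -mulr_suml.
  rewrite exD; congr ex; lra.
under eq_bigr do rewrite e mulrCA.
rewrite -mulr_sumr (wx_all p (fun j b => ex (br b / 4))).
have r : forall j : 'I_n, 0 <= (1 - p) * ex (br false / 4) + p * ex (br true / 4)
     <= ex ((3 / 8) * p).
  move=> j; rewrite !brE mul0r ex0 mulr1.
  have := @ex_small (1 / 4); have := ex_ge1D ((3 / 8) * p); have := ex_gt0 (1 / 4).
  move=> h1 h2 h3.
  have h4 : ex (1 / 4) <= 11 / 8 by move: h3; lra.
  case/andP: hp => p0 p1; apply/andP; split; nra.
have := ex_prod_le _ _ _ r; rewrite card_ord => h.
have h0 := ex_gt0 (- (n%:R * p) / 2).
apply: le_trans (ler_wpM2l (ltW h0) h) _.
rewrite exD; apply: ex_le; clear e r h h0; lra.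
Qed.

End Sec.

Set Implicit Arguments. Unset Strict Implicit. Unset Printing Implicit Defensive.
Section Sec. Bind Scope ring_scope with R.

Lemma mgf (p x : R) : 0 <= p <= 1 -> -(1/2) <= x <= 1/2 ->
  (1 - p) * ex (x * (0 - p)) + p * ex (x * (1 - p)) <= ex (2 * p * x ^+ 2).
Proof.
move=> /andP[p0 p1] hx.
have e1 : ex (x * (1 - p)) = ex x * ex (x * (0 - p)) by rewrite exD; congr ex; ring.
rewrite e1.
have h1 := ex_small x hx.
have h2 := ex_ge1D (p * x + 2 * p * x ^+ 2).
have h3 := ex_gt0 (x * (0 - p)).
have h4 : (1 - p) + p * ex x <= ex (p * x + 2 * p * x ^+ 2) by nra.
have -> : (1 - p) * ex (x * (0 - p)) + p * (ex x * ex (x * (0 - p))) =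
          ex (x * (0 - p)) * ((1 - p) + p * ex x) by ring.
apply: le_trans (ler_wpM2l (ltW h3) h4) _.
rewrite exD; apply: ex_le; lra.
Qed.

Lemma row_xy n m p q (i : 'I_m) (g : {ffun 'I_n -> bool} -> bool -> R) :
  \sum_(u : {ffun 'I_n -> bool} * {ffun 'I_m -> bool}) w1 p q u * g u.1 (u.2 i) =
  \sum_x wx p x * ((1 - q) * g x false + q * g x true).
Proof.
rewrite sum_pair; apply: eq_bigr => x _ /=.
rewrite -(@wx_coord m q i (g x)) mulr_sumr; apply: eq_bigr => y _.
by rewrite /w1 /= mulrA.
Qed.

Definition G3 n m K (p q lam : R) (u : {ffun 'I_n -> bool} * {ffun 'I_m -> bool}) : R :=
  (if sz u.1 <= 2 * (n%:R * p) then 1 else 0) *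
  ex (2 * p * lam ^+ 2 * sz u.1 * (3 * (K%:R * q)) - lam * (n%:R * p / 8)).

Definition H3 n m (p lam sg : R) (i : 'I_m) (u v : {ffun 'I_n -> bool} * {ffun 'I_m -> bool}) : R :=
  ex (br (v.2 i) * (sg * lam * Zf p u.1 v.1 - 2 * p * lam ^+ 2 * sz u.1)).

Lemma f3_dec n m K p q lam sg (d : sample n m K) k i :
  f3 p q lam sg d k i = G3 K p q lam (d k) * \prod_(l | l != k) H3 p lam sg i (d k) (d l).
Proof.
rewrite /f3 /G3 /H3 -[RHS]mulrA; congr (_ * _).
rewrite -ex_sum exD; congr ex.
have s1 : \sum_(l | l != k) br ((d l).2 i) * (sg * lam * Zf p (d k).1 (d l).1 - 2 * p * lam ^+ 2 * sz (d k).1)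
   = sg * lam * Nz p d k i - 2 * p * lam ^+ 2 * sz (d k).1 * \sum_(l | l != k) br ((d l).2 i).
  rewrite /Nz !mulr_sumr -sumrB; apply: eq_bigr => l _; ring.
rewrite s1; ring.
Qed.

Lemma mgf_Z n (p lam sg : R) (a : {ffun 'I_n -> bool}) :
  0 <= p <= 1 -> 0 <= lam <= 1/2 -> sg ^+ 2 = 1 ->
  \sum_x wx p x * ex (sg * lam * Zf p a x) <= ex (2 * p * lam ^+ 2 * sz a).
Proof.
move=> hp hl hs.
have e : forall x, ex (sg * lam * Zf p a x) = \prod_j ex (sg * lam * br (a j) * (br (x j) - p)).
  move=> x; rewrite /Zf mulr_sumr ex_sum; apply: eq_bigr => j _; congr ex; ring.
under eq_bigr do rewrite e.
rewrite (wx_all p (fun j b => ex (sg * lam * br (a j) * (br b - p)))).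
have -> : ex (2 * p * lam ^+ 2 * sz a) = \prod_(j < n) ex (2 * p * (sg * lam * br (a j)) ^+ 2).
  rewrite -ex_sum /sz mulr_sumr; congr ex; apply: eq_bigr => j _.
  rewrite !exprMn hs [br _ ^+ 2]expr2 brK; ring.
apply: ler_prod => j _; apply/andP; split.
  by apply: addr_ge0; apply: mulr_ge0; (try exact: ex_ge0); case/andP: hp => ? ?; lra.
rewrite [br false]brE [br true]brE /=; apply: mgf => //.
have h : (sg * lam * br (a j)) ^+ 2 <= 1 / 4.
  rewrite !exprMn hs [br _ ^+ 2]expr2 brK mul1r.
  have := br_ge0 (a j); have := br_le1 (a j); case/andP: hl => l0 l1.
  have : lam ^+ 2 <= 1/4 by rewrite expr2; nra.
  nra.
move: h; rewrite expr2; move: (sg * lam * br (a j)) => y h; apply/andP; split; nra.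
Qed.

Lemma H3_row n m (p q lam sg : R) (i : 'I_m) (t : {ffun 'I_n -> bool} * {ffun 'I_m -> bool}) :
  0 <= p <= 1 -> 0 <= q <= 1 -> 0 <= lam <= 1/2 -> sg ^+ 2 = 1 ->
  0 <= \sum_(u : {ffun 'I_n -> bool} * {ffun 'I_m -> bool}) w1 p q u * H3 p lam sg i t u <= 1.
Proof.
move=> hp hq hl hs; apply/andP; split.
  by apply: sumr_ge0 => u _; apply: mulr_ge0; [exact: w1_ge0 | exact: ex_ge0].
rewrite /H3.
rewrite (@row_xy n m p q i (fun x b => ex (br b * (sg * lam * Zf p t.1 x - 2 * p * lam ^+ 2 * sz t.1)))).
set th := 2 * p * lam ^+ 2 * sz t.1.
have e : forall x : {ffun 'I_n -> bool},
   wx p x * ((1 - q) * ex (br false * (sg * lam * Zf p t.1 x - th)) +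
             q * ex (br true * (sg * lam * Zf p t.1 x - th)))
   = (1 - q) * wx p x + (q * ex (- th)) * (wx p x * ex (sg * lam * Zf p t.1 x)).
  move=> x; rewrite !brE mul0r mul1r ex0.
  have -> : ex (sg * lam * Zf p t.1 x - th) = ex (- th) * ex (sg * lam * Zf p t.1 x).
    by rewrite exD addrC.
  ring.
under eq_bigr do rewrite e.
rewrite big_split /= -!mulr_sumr wx_mass.
have h := mgf_Z t.1 hp hl hs.
have h0 := ex_gt0 (- th).
have h1 : ex (- th) * ex th = 1 by rewrite exD addNr ex0.
case/andP: hq => q0 q1.
have h2 : q * ex (- th) * \sum_x wx p x * ex (sg * lam * Zf p t.1 x) <= q * ex (- th) * ex th.
  apply: ler_wpM2l => //; exact: mulr_ge0 q0 (ltW h0).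
have : q * ex (- th) * ex th = q by rewrite -mulrA h1 mulr1.
lra.
Qed.

Lemma Ex_f3 n m K (p q lam sg : R) (k : 'I_K) (i : 'I_m) :
  0 <= p <= 1 -> 0 <= q <= 1 -> 0 <= lam <= 1/2 -> sg ^+ 2 = 1 ->
  \sum_(d : sample n m K) sample_weight p q d * f3 p q lam sg d k i <=
  ex (2 * p * lam ^+ 2 * (2 * (n%:R * p)) * (3 * (K%:R * q)) - lam * (n%:R * p / 8)).
Proof.
move=> hp hq hl hs.
under eq_bigr do rewrite f3_dec swE.
rewrite sum_sample (E_cond (w1 p q) k (G3 K p q lam) (H3 p lam sg i)).
set B := ex _.
rewrite -[B]mul1r -[X in X * B](@w1_mass n m p q) mulr_suml; apply: ler_sum => t _.
have hP : 0 <= \prod_(l | l != k) \sum_u w1 p q u * H3 p lam sg i t u <= 1.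
  apply/andP; split.
    by apply: prodr_ge0 => l _; case/andP: (H3_row i t hp hq hl hs).
  by apply: prodr_ile1 => l _; exact: (H3_row i t hp hq hl hs).
case/andP: hP => P0 P1.
have hw := w1_ge0 t hp hq.
have hG : 0 <= G3 K p q lam t <= B.
  rewrite /G3 /B; case: ifP => h; last by rewrite mul0r lexx ex_ge0.
  rewrite mul1r ex_ge0 /=; apply: ex_le.
  case/andP: hp => p0 p1; case/andP: hq => q0 q1.
  have s0 : 0 <= sz t.1 by apply: sumr_ge0 => j _; exact: br_ge0.
  have c0 : 0 <= 2 * p * lam ^+ 2 by apply: mulr_ge0; [lra | exact: sqr_ge0].
  have k0 : (0:R) <= K%:R by exact: ler0n.
  have c1 : 0 <= 3 * (K%:R * q) by have := mulr_ge0 k0 q0; lra.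
  have := ler_wpM2l c0 h => h2.
  have := ler_wpM2r c1 h2 => h3.
  lra.
case/andP: hG => G0 G1.
apply: le_trans (_ : w1 p q t * G3 K p q lam t <= _).
  by apply: ler_piMr; [exact: mulr_ge0 hw G0 | exact: P1].
exact: ler_wpM2l.
Qed.

End Sec.

Set Implicit Arguments. Unset Strict Implicit. Unset Printing Implicit Defensive.
Section Sec. Bind Scope ring_scope with R.

Lemma sum_le_const N (F : 'I_N -> R) c :
  (forall i, F i <= c) -> \sum_i F i <= N%:R * c.
Proof.
move=> h; rewrite mulr_natl -[X in _ *+ X]card_ord -sumr_const.
by apply: ler_sum => i _; exact: h.
Qed.

Lemma ExFF_le n m K (p q lam b1 b2 b3 : R) :
  (forall i, \sum_(d : sample n m K) sample_weight p q d * f1 q d i <= b1) ->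
  (forall k, \sum_(d : sample n m K) sample_weight p q d * (f2 p d k + f2' p d k) <= b2) ->
  (forall k i, \sum_(d : sample n m K) sample_weight p q d *
       (f3 p q lam 1 d k i + f3 p q lam (-1) d k i) <= b3) ->
  \sum_(d : sample n m K) sample_weight p q d * FF p q lam d <=
  m%:R * b1 + K%:R * b2 + (K%:R * m%:R) * b3.
Proof.
move=> h1 h2 h3.
have -> : \sum_(d : sample n m K) sample_weight p q d * FF p q lam d =
   \sum_(d : sample n m K) sample_weight p q d * \sum_i f1 q d i +
   \sum_(d : sample n m K) sample_weight p q d * \sum_k (f2 p d k + f2' p d k) +
   \sum_(d : sample n m K) sample_weight p q d * \sum_k \sum_i
       (f3 p q lam 1 d k i + f3 p q lam (-1) d k i).
  by rewrite -!big_split /=; apply: eq_bigr => d _; rewrite /FF !mulrDr.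
rewrite !Ex_sum.
have e3 : \sum_k \sum_(d : sample n m K) sample_weight p q d * \sum_i
       (f3 p q lam 1 d k i + f3 p q lam (-1) d k i) <= (K%:R * m%:R) * b3.
  rewrite -mulrA; apply: sum_le_const => k.
  rewrite Ex_sum; apply: sum_le_const => i; exact: h3.
have e1 : \sum_i \sum_(d : sample n m K) sample_weight p q d * f1 q d i <= m%:R * b1.
  apply: sum_le_const => i; exact: h1.
have e2 : \sum_k \sum_(d : sample n m K) sample_weight p q d * (f2 p d k + f2' p d k) <= K%:R * b2.
  apply: sum_le_const => k; exact: h2.
by apply: lerD; [apply: lerD|].
Qed.
Lemma ln_pos (z : R) : 1 < z -> 0 < ln z.
Proof.
move=> hz; rewrite ltNge; apply/negP => h.
have := ex_le _ _ h; rewrite ex0 ex_ln; lra.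
Qed.

Lemma tail1 (z x : R) : 0 < z -> ln z <= x -> ex (- x) * z <= 1.
Proof.
move=> z0 hx; have ez := ex_ln _ z0.
have e1 : ex (- ln z) * z = 1 by rewrite -[X in _ * X]ez exD addNr ex0.
have h : ex (- x) <= ex (- ln z) by apply: ex_le; lra.
rewrite -e1; apply: ler_wpM2r => //; exact: ltW.
Qed.

Lemma tail2 (z x : R) : 2 <= z -> 2 * ln z <= x -> ex (- x) * (2 * z) <= 1.
Proof.
move=> z2 hx; have z0 : 0 < z by lra.
have ez := ex_ln _ z0.
have e1 : ex (- ln z) * z = 1 by rewrite -[X in _ * X]ez exD addNr ex0.
have h : ex (- x) <= ex (- ln z) * ex (- ln z) by rewrite exD; apply: ex_le; lra.
have e0 := ex_gt0 (- ln z).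
have h2 : ex (- x) * (2 * z) <= ex (- ln z) * ex (- ln z) * (2 * z).
  by apply: ler_wpM2r => //; lra.
have h3 : ex (- ln z) * ex (- ln z) * (2 * z) = 2 * ex (- ln z).
  have -> : ex (- ln z) * ex (- ln z) * (2 * z) = 2 * ex (- ln z) * (ex (- ln z) * z) by ring.
  by rewrite e1 mulr1.
have h4 : ex (- ln z) * 2 <= 1 by have := ler_wpM2l (ltW e0) z2; lra.
lra.
Qed.

Lemma Prob_ge0 n m K p q (E : sample n m K -> Prop) :
  0 <= p <= 1 -> 0 <= q <= 1 -> 0 <= Prob p q E.
Proof.
move=> hp hq; apply: sumr_ge0 => d _; case: ifP => // _; exact: sw_ge0.
Qed.

Lemma Prob_true n m K p q (E : sample n m K -> Prop) :
  (forall d, E d) -> Prob p q E = 1.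
Proof.
move=> h; rewrite /Prob -(@sw_mass n m K p q); apply: eq_bigr => d _.
by rewrite asboolT.
Qed.

Lemma lam_bound (n K : nat) (p q z : R) :
  0 < p -> p <= 1/2 -> 0 < q -> 1 <= K%:R :> R -> 0 < ln z ->
  256 * ln z <= n%:R * p ->
  K%:R * q * ln z <= 1 / 6144 * n%:R ->
  exists lam : R, 0 < lam <= 1/2 /\
    2 * ln z <= lam * (n%:R * p / 8) - 2 * p * lam ^+ 2 * (2 * (n%:R * p)) * (3 * (K%:R * q)).
Proof.
move=> p0 p1 q0 hK lz hC hc.
have kq : 0 < K%:R * q by apply: mulr_gt0 => //; lra.
have n0 : 0 <= n%:R * p by lra.
set u := K%:R * q * p.
have u0 : 0 < u by apply: mulr_gt0.
have key : forall lam : R, 2 * p * lam ^+ 2 * (2 * (n%:R * p)) * (3 * (K%:R * q)) =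
   12 * lam ^+ 2 * (n%:R * p) * u by move=> lam; rewrite /u; ring.
case: (leP (1/96) u) => hu.
  exists (1 / (192 * u)); split.
    apply/andP; split; first by apply: divr_gt0 => //; lra.
    rewrite ler_pdivrMr; last lra.
    lra.
  rewrite key.
  have e : 1 / (192 * u) * u = 1 / 192 by field; lra.
  have -> : 1 / (192 * u) * (n%:R * p / 8) - 12 * (1 / (192 * u)) ^+ 2 * (n%:R * p) * u
          = 1 / (192 * u) * (n%:R * p) / 16.
    rewrite expr2.
    have -> : 12 * (1 / (192 * u) * (1 / (192 * u))) * (n%:R * p) * u =
              12 * (1 / (192 * u)) * (n%:R * p) * (1 / (192 * u) * u) by ring.
    rewrite e; field; lra.
  have -> : 1 / (192 * u) * (n%:R * p) / 16 = n%:R / (3072 * (K%:R * q)).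
    rewrite /u; field; apply/andP; split; lra.
  rewrite ler_pdivlMr; last lra.
  lra.
exists (1/2); split; first by apply/andP; split; lra.
rewrite key.
have : (n%:R * p) * u <= (n%:R * p) * (1/96) by apply: ler_wpM2l => //; lra.
rewrite !expr2; lra.
Qed.

Lemma main_thm :
  exists C c : R, 0 < C /\ 0 < c /\
  forall (n m K : nat) (p q m0 : R),
    0 < p -> p <= 1 / 2 -> 0 < q -> q < 1 ->
    m%:R <= m0 ->
    C * ln m0 <= K%:R * q ->
    C * ln (K%:R * m0) <= n%:R * p ->
    K%:R * q * ln (K%:R * m0) <= c * n%:R ->
    1 - 3 * m%:R / m0 <= Prob p q (fun d : sample n m K => interpolable d) /\
    1 - 3 * m%:R / m0 <=
      Prob p q (fun d : sample n m K =>
        forall b : 'cV[R]_m,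
          (forall i : 'I_m, n%:R * p / 8 < b i 0 < n%:R * p / 4) ->
          forall k : 'I_K, thr_maps (hebb_W p d) b (d k).1 (d k).2).
Proof.
exists 256, (1/6144); split; first lra; split; first lra.
move=> n m K p q m0 p0 p1 q0 q1 hm hC1 hC2 hc.
have hp : 0 <= p <= 1 by apply/andP; split; lra.
have hq : 0 <= q <= 1 by apply/andP; split; lra.
case: (posnP m) => [mE|mpos].
  subst m; rewrite mulr0 mul0r subr0; split; rewrite Prob_true //.
  - by move=> d; exists 0, 0 => k [].
  - by move=> d b _ k [].
have hm1 : 1 <= m%:R :> R by rewrite ler1n.
case: (leP m0 (3 * m%:R)) => hm0.
  have m00 : 0 < m0 by lra.
  have : 1 <= 3 * m%:R / m0 by rewrite ler_pdivlMr // mul1r.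
  move=> h; split; apply: le_trans (Prob_ge0 _ hp hq); lra.
have m00 : 0 < m0 by lra.
have lm0 : 0 < ln m0 by apply: ln_pos; lra.
have kq : 0 < K%:R * q by lra.
have hK : 1 <= K%:R :> R.
  have : 0 < K%:R :> R by rewrite -(pmulr_lgt0 _ q0).
  by rewrite ltr0n ler1n.
set z := K%:R * m0.
have z2 : 2 <= z.
  rewrite /z; have m03 : 3 <= m0 by clear -hm1 hm0; lra.
  have : 1 * m0 <= K%:R * m0 by apply: ler_wpM2r => //; exact: ltW.
  clear -m03; lra.
have lz : 0 < ln z by apply: ln_pos; clear -z2; lra.
have np0 : 0 < n%:R * p by clear -hC2 lz; lra.
have [lam [hl hx]] := lam_bound p0 p1 q0 hK lz hC2 hc.
have hl' : 0 <= lam <= 1/2 by case/andP: hl => a b; rewrite (ltW a) b.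
set x3 := lam * (n%:R * p / 8) - 2 * p * lam ^+ 2 * (2 * (n%:R * p)) * (3 * (K%:R * q)).
have t3 := tail2 z2 hx.
have t2 : ex (- (n%:R * p) / 128) * (2 * z) <= 1.
  have -> : - (n%:R * p) / 128 = - (n%:R * p / 128) by ring.
  apply: tail2 => //; clear -hC2; lra.
have t1 : ex (- (K%:R * q) / 2) * m0 <= 1.
  have -> : - (K%:R * q) / 2 = - (K%:R * q / 2) by ring.
  apply: tail1 => //; clear -hC1 lm0; lra.
have t2' : ex (- (n%:R * p) / 8) <= ex (- (n%:R * p) / 128) by apply: ex_le; clear -np0; lra.
have S : \sum_(d : sample n m K) sample_weight p q d * FF p q lam d <=
   m%:R * ex (- (K%:R * q) / 2) +
   K%:R * (ex (- (n%:R * p) / 128) + ex (- (n%:R * p) / 8)) +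
   (K%:R * m%:R) * (2 * ex (- x3)).
  apply: ExFF_le.
  - by move=> i; exact: Ex_f1.
  - move=> k; under eq_bigr do rewrite mulrDr; rewrite big_split /=.
    by apply: lerD; [exact: Ex_f2 | exact: Ex_f2'].
  - move=> k i; under eq_bigr do rewrite mulrDr; rewrite big_split /=.
    have h1 := @Ex_f3 n m K p q lam 1 k i hp hq hl' (expr1n _ 2).
    have s1 : (-1 : R) ^+ 2 = 1 by rewrite sqrrN expr1n.
    have h2 := @Ex_f3 n m K p q lam (-1) k i hp hq hl' s1.
    have ex3 : ex (- x3) = ex (2 * p * lam ^+ 2 * (2 * (n%:R * p)) * (3 * (K%:R * q)) - lam * (n%:R * p / 8)).
      by rewrite /x3; congr ex; ring.
    rewrite ex3 -[2 * _]/(2%:R * _) mulr_natl mulr2n.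
    by apply: lerD.
have fin : m%:R * ex (- (K%:R * q) / 2) +
   K%:R * (ex (- (n%:R * p) / 128) + ex (- (n%:R * p) / 8)) +
   (K%:R * m%:R) * (2 * ex (- x3)) <= 3 * m%:R / m0.
  rewrite ler_pdivlMr //.
  have e1 := ex_gt0 (- (K%:R * q) / 2).
  have f1 : m%:R * (ex (- (K%:R * q) / 2) * m0) <= m%:R * 1.
    by apply: ler_wpM2l => //; clear -t1; lra.
  have f2 : (ex (- (n%:R * p) / 128) + ex (- (n%:R * p) / 8)) * z <=
            ex (- (n%:R * p) / 128) * (2 * z).
    have -> : ex (- (n%:R * p) / 128) * (2 * z) = (2 * ex (- (n%:R * p) / 128)) * z by ring.
    apply: ler_wpM2r; first by clear -z2; lra.
    by clear -t2'; lra.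
  have f3 : m%:R * (ex (- x3) * (2 * z)) <= m%:R * 1.
    by apply: ler_wpM2l => //; clear -t3; lra.
  have -> : (m%:R * ex (- (K%:R * q) / 2) +
     K%:R * (ex (- (n%:R * p) / 128) + ex (- (n%:R * p) / 8)) +
     K%:R * m%:R * (2 * ex (- x3))) * m0 =
     m%:R * (ex (- (K%:R * q) / 2) * m0) +
     (ex (- (n%:R * p) / 128) + ex (- (n%:R * p) / 8)) * z +
     m%:R * (ex (- x3) * (2 * z)) by rewrite /z; ring.
  clear -f1 f2 f3 t2 hm1; lra.
have key : 1 - 3 * m%:R / m0 <= 1 - \sum_(d : sample n m K) sample_weight p q d * FF p q lam d.
  clear -S fin; lra.
case/andP: hl => l0 l1.
have hp2 : 0 <= p <= 1/2 by rewrite (ltW p0) p1.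
split.
  apply: le_trans key _; apply: Prob_lb => //; first exact: FF_ge0.
  move=> d hd; exists (hebb_W p d), (const_mx (3 * (n%:R * p) / 16)).
  apply: (FF_good l0 hp2 (ltW q0) hd) => i; rewrite mxE; apply/andP; split; clear -np0; lra.
apply: le_trans key _; apply: Prob_lb => //; first exact: FF_ge0.
move=> d hd; exact: (FF_good l0 hp2 (ltW q0) hd).
Qed.

End Sec.

Theorem theorem7p2 :
  exists C c : R, 0 < C /\ 0 < c /\
  forall (n m K : nat) (p q m0 : R),
    0 < p -> p <= 1 / 2 -> 0 < q -> q < 1 ->
    m%:R <= m0 ->
    C * ln m0 <= K%:R * q ->
    C * ln (K%:R * m0) <= n%:R * p ->
    K%:R * q * ln (K%:R * m0) <= c * n%:R ->
    1 - 3 * m%:R / m0 <= Prob p q (fun d : sample n m K => interpolable d) /\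
    1 - 3 * m%:R / m0 <=
      Prob p q (fun d : sample n m K =>
        forall b : 'cV[R]_m,
          (forall i : 'I_m, n%:R * p / 8 < b i 0 < n%:R * p / 4) ->
          forall k : 'I_K, thr_maps (hebb_W p d) b (d k).1 (d k).2).
Proof.
exact: main_thm.
Qed.
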